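(* Let $\{(\lambda^\alpha_{i,j})_{i,j\in\mathbb{N}}:\alpha<\omega_1\}$ be a family of real matrices each of which satisfies: (i) $\lim_{i\to\infty}\lambda^\alpha_{i,j}=0$ for every $j\in\mathbb{N}$; (ii) $\sum_{j\in\mathbb{N}}|\lambda^\alpha_{i,j}|<\infty$ for every $i\in\mathbb{N}$; (iii) $\lim_{i\to\infty}\sum_{j\in\mathbb{N}}\lambda^\alpha_{i,j}=1$. Then there exists an almost disjoint family $\mathcal{F}$ such that for every $\alpha<\omega_1$ there is $N'_\alpha\in\mathcal{F}$ for which the sequence $\big(\sum_{j\in N'_\alpha}\lambda^\alpha_{i,j}\big)_{i\in\mathbb{N}}$ does not converge to $0$.
   Context: An almost disjoint family is an infinite family of pairwise almost disjoint infinite subsets of $\mathbb{N}$, where two sets are almost disjoint if their intersection is finite. $\omega_1$ is the first uncountable ordinal. *)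

(* Defs.v *)
From HB Require Import structures.
From mathcomp Require Import all_boot all_order all_algebra.
From mathcomp Require Import all_classical all_reals all_analysis.
From mathcomp Require Import Rstruct Rstruct_topology.
From Stdlib Require Import Reals.
Set Implicit Arguments. Unset Strict Implicit. Unset Printing Implicit Defensive.
Import Order.TTheory GRing.Theory Num.Theory.
Local Open Scope classical_set_scope.
Local Open Scope ring_scope.

Definition countable_subset (T : Type) (A : set T) : Prop :=
  exists f : T -> nat, forall x y, A x -> A y -> f x = f y -> x = y.

(* (W, lt) is (order-isomorphic to) the first uncountable ordinal omega_1:
   a strict well-order whose proper initial segments are all countable,
   while W itself is uncountable. *)
Record is_omega1 (W : Type) (lt : W -> W -> Prop) : Prop := {
  om1_irrefl : forall a, ~ lt a a;
  om1_trans : forall a b c, lt a b -> lt b c -> lt a c;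
  om1_total : forall a b, lt a b \/ a = b \/ lt b a;
  om1_wf : well_founded lt;
  om1_segments : forall a, countable_subset [set b | lt b a];
  om1_uncountable : ~ countable_subset [set: W]
}.

Definition almost_disjoint_family (F : set (set nat)) : Prop :=
  infinite_set F /\
  (forall A, F A -> infinite_set A) /\
  (forall A B, F A -> F B -> A <> B -> finite_set (A `&` B)).

Definition rseries_sum (u : nat -> R) : R := limn (series u).

(* Main.v *)
Require Import Defs.
From HB Require Import structures.
From mathcomp Require Import all_boot all_order all_algebra.
From mathcomp Require Import all_classical all_reals all_analysis.
From mathcomp Require Import Rstruct Rstruct_topology.
From Stdlib Require Import Reals.
From mathcomp Require Import lra.
From Stdlib Require Import ClassicalEpsilon.
Import Order.TTheory GRing.Theory Num.Theory.
Local Open Scope classical_set_scope.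
Local Open Scope ring_scope.

Lemma KE (u v : nat -> R) : (forall j, `|v j| <= `|u j|) ->
  cvgn (series (fun j => `|u j|)) ->
  cvgn (series v) /\ forall q, `|limn (series v) - series v q| <=
     limn (series (fun j => `|u j|)) - series (fun j => `|u j|) q.
Proof.
move=> le cu.
have cv : cvgn (series v).
  apply: (@normed_cvg R R^o); apply: (series_le_cvg _ _ _ cu) => //=.
split => // q.
have key : forall n : nat, leq q n -> `|series v n - series v q| <=
     limn (series (fun j => `|u j|)) - series (fun j => `|u j|) q.
  move=> n qn; rewrite sub_series_geq //.
  apply: (le_trans (ler_norm_sum _ _ _)).
  apply: (@le_trans _ _ (series (fun j => `|u j|) n - series (fun j => `|u j|) q)).
    by rewrite sub_series_geq //; apply: ler_sum => j _; exact: le.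
  rewrite lerB //; apply: nondecreasing_cvgn_le => //.
  by apply: nondecreasing_series => j _; rewrite normr_ge0.
rewrite ler_norml; apply/andP; split.
- rewrite lerBrDr; apply: limr_ge => //.
  near=> n.
  have /andP[h _] : (- (limn (series (fun j => `|u j|)) - series (fun j => `|u j|) q)
      <= series v n - series v q <= limn (series (fun j => `|u j|)) - series (fun j => `|u j|) q).
    by rewrite -ler_norml; apply: key; near: n; exact: nbhs_infty_ge.
  by rewrite -lerBrDr.
- rewrite lerBlDr; apply: limr_le => //.
  near=> n.
  have /andP[_ h] : (- (limn (series (fun j => `|u j|)) - series (fun j => `|u j|) q)
      <= series v n - series v q <= limn (series (fun j => `|u j|)) - series (fun j => `|u j|) q).
    by rewrite -ler_norml; apply: key; near: n; exact: nbhs_infty_ge.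
  by rewrite -lerBlDr.
Unshelve. all: by end_near.
Qed.

Lemma cvg_finsum (f : nat -> nat -> R) p :
  (forall j, (fun i => f i j) @ \oo --> (0:R)) ->
  (fun i => \sum_(j < p) f i j) @ \oo --> (0:R).
Proof.
move=> h; elim: p => [|p IH].
  have -> : (fun i => \sum_(j < 0) f i j) = fun=> (0:R).
    by apply: funext => i; rewrite big_ord0.
  exact: cvg_cst.
have -> : (fun i => \sum_(j < p.+1) f i j) =
   (fun i => \sum_(j < p) f i j) + (fun i => f i p).
  by apply: funext => i; rewrite big_ord_recr.
rewrite -[X in _ --> X]addr0; apply: (@cvgD _ R^o) => //; exact: h.
Qed.

Definition msk (X : set nat) (u : nat -> R) : nat -> R :=
  fun j => if j \in X then u j else 0.

Implicit Types (X : set nat) (u : nat -> R).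
Lemma msk_le X u j : `|msk X u j| <= `|u j|.
Proof. by rewrite /msk; case: ifP => _; rewrite ?normr0 ?normr_ge0. Qed.

Definition TT (u : nat -> R) q :=
  limn (series (fun j => `|u j|)) - series (fun j => `|u j|) q.

Lemma msk_cvg X u : cvgn (series (fun j => `|u j|)) -> cvgn (series (msk X u)).
Proof. by move=> cu; have [] := @KE u (msk X u) (msk_le X u) cu. Qed.

Lemma msk_approx X u q : cvgn (series (fun j => `|u j|)) ->
  `|rseries_sum (msk X u) - series (msk X u) q| <= TT u q.
Proof. by move=> cu; have [_ ] := @KE u (msk X u) (msk_le X u) cu; apply. Qed.

Lemma msk_head X u p : `|series (msk X u) p| <= series (fun j => `|u j|) p.
Proof.
rewrite /series /=; apply: (le_trans (ler_norm_sum _ _ _)).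
by apply: ler_sum => j _; exact: msk_le.
Qed.

Lemma distR {f : nat -> R} {y : R} : f @ \oo --> y ->
  forall e : R, 0 < e -> \forall n \near \oo, `|y - f n| <= e.
Proof. by move=> h e e0; exact: (@cvgr_dist_le _ R^o _ _ _ f y h e e0). Qed.

Lemma TT_small u e : cvgn (series (fun j => `|u j|)) -> 0 < e ->
  \forall q \near \oo, TT u q <= e.
Proof.
move=> cu e0; have := distR cu _ e0.
apply: filterS => q; rewrite /TT; apply: le_trans.
by rewrite ler_norm.
Qed.

Lemma setT_msk u : msk [set: nat] u = u.
Proof. by apply: funext => j; rewrite /msk mem_setT. Qed.

Definition eps : R := 16^-1.
Lemma eps_gt0 : 0 < eps. Proof. by rewrite /eps invr_gt0. Qed.

Lemma ev_ex {P : nat -> Prop} : (\forall i \near \oo, P i) -> exists i, P i.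
Proof. by move=> [N _ hN]; exists N; apply: hN => /=. Qed.

Section Core.
Variables (lam : nat -> nat -> R)
 (h1 : forall j, (fun i => lam i j) @ \oo --> (0:R))
 (h2 : forall i, cvgn (series (fun j => `|lam i j|)))
 (h3 : (fun i => rseries_sum (lam i)) @ \oo --> (1:R))
 (C : nat -> set nat)
 (Cmono : forall m n, (m <= n)%nat -> C m `<=` C n)
 (hC : forall n, (fun i => rseries_sum (msk (C n) (lam i))) @ \oo --> (0:R)).

Lemma head_cvg p : (fun i => series (fun j => `|lam i j|) p) @ \oo --> (0:R).
Proof.
have -> : (fun i => series (fun j => `|lam i j|) p) = (fun i => \sum_(j < p) `|lam i j|).
  by apply: funext => i; rewrite seriesEord.
apply: (cvg_finsum (fun i j => `|lam i j|)) => j; exact/(@norm_cvg0P _ R^o)/h1.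
Qed.

Lemma step k i0 p : exists iq : nat * nat, (i0 < iq.1)%nat /\ (p <= iq.2)%nat /\
  series (fun j => `|lam iq.1 j|) p <= eps /\ `|rseries_sum (lam iq.1) - 1| <= eps /\
  `|rseries_sum (msk (C k) (lam iq.1))| <= eps /\ TT (lam iq.1) iq.2 <= eps.
Proof.
have ev : \forall i \near \oo, [/\ (i0 < i)%nat, series (fun j => `|lam i j|) p <= eps,
   `|rseries_sum (lam i) - 1| <= eps & `|rseries_sum (msk (C k) (lam i))| <= eps].
  near=> i; split.
  - by near: i; exact: nbhs_infty_gt.
  - near: i; have := distR (head_cvg p) _ eps_gt0; apply: filterS => i.
    by rewrite sub0r normrN; apply: le_trans; rewrite ler_norm.
  - near: i; have := distR h3 _ eps_gt0; apply: filterS => i.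
    by rewrite distrC.
  - near: i; have := distR (hC k) _ eps_gt0; apply: filterS => i.
    by rewrite sub0r normrN.
have [i [hi1 hi2 hi3 hi4]] := ev_ex ev.
have evq : \forall q \near \oo, (p <= q)%nat /\ TT (lam i) q <= eps.
  near=> q; split; first by near: q; exact: nbhs_infty_ge.
  by near: q; exact: TT_small (h2 i) eps_gt0.
have [q [hq1 hq2]] := ev_ex evq.
by exists (i, q).
Unshelve. all: by end_near.
Qed.


Definition Spec k i0 p (iq : nat * nat) := (i0 < iq.1)%nat /\ (p <= iq.2)%nat /\
  series (fun j => `|lam iq.1 j|) p <= eps /\ `|rseries_sum (lam iq.1) - 1| <= eps /\
  `|rseries_sum (msk (C k) (lam iq.1))| <= eps /\ TT (lam iq.1) iq.2 <= eps.

Lemma normle (x e : R) : `|x| <= e -> - e <= x /\ x <= e.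
Proof. by rewrite ler_norml => /andP. Qed.

Lemma core : exists N : set nat, (forall n, finite_set (N `&` C n)) /\
  ~ ((fun i => rseries_sum (msk N (lam i))) @ \oo --> (0:R)).
Proof.
have /choice [f hf] : forall x : nat * (nat * nat), exists iq, Spec x.1 x.2.1 x.2.2 iq.
  by move=> [k [i0 p]]; exact: step.
pose s := fix s n := match n with 0 => (0%nat, 0%nat) | n'.+1 => f (n', s n') end.
have sS : forall n, s n.+1 = f (n, s n) by [].
pose Q k := (s k).2.
pose I k := (s k.+1).1.
have hS : forall k, Spec k (s k).1 (Q k) (s k.+1) by move=> k; rewrite sS; exact: (hf (k, s k)).
have Qmono : forall k, (Q k <= Q k.+1)%nat by move=> k; have [_ [h _]] := hS k.
have Qle : forall m n, (m <= n)%nat -> (Q m <= Q n)%nat.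
  move=> m n mn; rewrite -(subnKC mn); elim: (n - m)%nat => [|d IH]; first by rewrite addn0.
  by rewrite addnS (leq_trans IH).
have sge : forall k, (k <= (s k).1)%nat.
  elim=> [//|k IH]; have [h _] := hS k; exact: leq_ltn_trans IH h.
have Ige : forall k, (k < I k)%nat by move=> k; exact: sge k.+1.
pose N := [set j | exists k, (Q k <= j < Q k.+1)%nat /\ ~ C k j].
have memN : forall k j, (Q k <= j < Q k.+1)%nat -> (N j <-> ~ C k j).
  move=> k j /andP[h1' h2']; split; last by move=> h; exists k; rewrite h1' h2'.
  move=> [k' [/andP[g3 g4] g5]].
  case: (ltngtP k' k) => hk.
  - have := Qle _ _ hk; rewrite leqNgt => /negP; case; exact: leq_ltn_trans h1' g4.
  - have := Qle _ _ hk; rewrite leqNgt => /negP; case; exact: leq_ltn_trans g3 h2'.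
  - by rewrite -hk.
exists N; split.
  move=> n; apply: (@sub_finite_set _ _ `I_(Q n)); last exact: finite_II.
  move=> j [[k [/andP[g3 g4] g5]] g6] /=.
  case: (leqP n k) => hk; first by exfalso; apply: g5; exact: Cmono hk _ g6.
  exact: leq_trans g4 (Qle _ _ hk).
have main : forall k, 2^-1 <= rseries_sum (msk N (lam (I k))).
  move=> k; have [_ [_ [Hp [H1 [HC HT]]]]] := hS k.
  rewrite -/(I k) in Hp H1 HC HT.
  set u := lam (I k) in Hp H1 HC HT *.
  have hu : cvgn (series (fun j => `|u j|)) by exact: h2.
  have a1 := msk_approx [set: nat] u (Q k.+1) hu; rewrite setT_msk in a1.
  have a2 := msk_approx (C k) u (Q k.+1) hu.
  have a3 := msk_approx N u (Q k.+1) hu.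
  have b1 := msk_head [set: nat] u (Q k); rewrite setT_msk in b1.
  have b2 := msk_head (C k) u (Q k).
  have b3 := msk_head N u (Q k).
  have e1 := sub_series_geq u (Qmono k).
  have e2 := sub_series_geq (msk (C k) u) (Qmono k).
  have e3 := sub_series_geq (msk N u) (Qmono k).
  have mid : \sum_(Q k <= j < Q k.+1) msk N u j =
      \sum_(Q k <= j < Q k.+1) u j - \sum_(Q k <= j < Q k.+1) msk (C k) u j.
    rewrite -sumrB; apply: eq_big_nat => j hj.
    rewrite /msk; case: ifP => hN; case: ifP => hC' //.
    - by exfalso; move: hN hC' => /set_mem /(memN _ _ hj) ? /set_mem.
    - by rewrite subr0.
    - by rewrite subrr.
    - by exfalso; move: hN hC' => /negbT /negP hN /negbT /negP hC'; apply: hN; apply/mem_set/(memN _ _ hj) => /mem_set.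
  move: a1 a2 a3 b1 b2 b3 H1 HC => /normle a1 /normle a2 /normle a3 /normle b1
     /normle b2 /normle b3 /normle H1 /normle HC.
  rewrite /eps in Hp HT a1 a2 a3 b1 b2 b3 H1 HC *.
  have TTe : TT u (Q k.+1) <= 16^-1 by [].
  move: e1 e2 e3 mid; rewrite /rseries_sum in H1 HC a1 a2 a3 *.
  lra.
move=> hcv.
have := @cvgr0_norm_lt _ R^o _ _ _ _ hcv (2^-1) ltac:(by []).
case=> N0 _ hN0.
have := hN0 (I N0) (ltnW (Ige N0)); have := main N0.
move=> h h'; have := ler_norm (rseries_sum (msk N (lam (I N0)))).
lra.
Qed.

End Core.

Lemma seq_bound (s : seq nat) : exists b, forall j, j \in s -> (j < b)%nat.
Proof.
elim: s => [|a s [b hb]]; first by exists 0%nat.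
exists (maxn a.+1 b) => j; rewrite inE => /orP[/eqP->|/hb h].
  by rewrite leq_max leqnn.
by rewrite leq_max h orbT.
Qed.

Lemma finite_bound (X : set nat) : finite_set X -> exists b, X `<=` `I_b.
Proof.
move=> /finite_seqP [s ->]; have [b hb] := seq_bound s.
by exists b => j /= hj; apply: hb.
Qed.

Lemma unbounded_infinite (X : set nat) : (forall n, exists j, (n <= j)%nat /\ X j) ->
  infinite_set X.
Proof.
move=> h /finite_bound [b hb]; have [j [h1' h2']] := h b.
by have := hb _ h2'; rewrite /= ltnNge h1'.
Qed.

Lemma msk_union X Y u : cvgn (series (fun j => `|u j|)) ->
  rseries_sum (msk X u) + rseries_sum (msk Y u) =
  rseries_sum (msk (X `|` Y) u) + rseries_sum (msk (X `&` Y) u).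
Proof.
move=> hu.
have E : msk X u + msk Y u = msk (X `|` Y) u + msk (X `&` Y) u; last first.
  have c := fun Z => msk_cvg Z u hu.
  by rewrite /rseries_sum -lim_seriesD // E lim_seriesD.
rewrite funeqE => j.
suff H : msk X u j + msk Y u j = msk (X `|` Y) u j + msk (X `&` Y) u j by exact: H.
rewrite /msk.
case: (boolP (j \in X)) => hX; case: (boolP (j \in Y)) => hY.
- by rewrite !ifT //; apply/mem_set; [split|left]; apply/set_mem.
- have nY : ~ Y j by move=> /mem_set; apply/negP.
  rewrite ifT; last by apply/mem_set; left; apply/set_mem.
  by rewrite memNset ?addr0 // => -[_ /nY].
- have nX : ~ X j by move=> /mem_set; apply/negP.
  rewrite ifT; last by apply/mem_set; right; apply/set_mem.
  by rewrite memNset ?addr0 ?add0r // => -[/nX].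
- have nX : ~ X j by move=> /mem_set; apply/negP.
  have nY : ~ Y j by move=> /mem_set; apply/negP.
  rewrite !memNset ?addr0 //; first by move=> [/nX].
  by move=> [/nX|/nY].
Qed.

Section Outer.
Variables (lam : nat -> nat -> R)
 (h1 : forall j, (fun i => lam i j) @ \oo --> (0:R))
 (h2 : forall i, cvgn (series (fun j => `|lam i j|))).

Definition sX X := fun i => rseries_sum (msk X (lam i)).

Lemma lim_ev_cst (w : nat -> R) b : (forall j, (b <= j)%nat -> w j = 0) ->
  limn (series w) = series w b.
Proof.
move=> hw; apply: (lim_near_cst (@Rhausdorff R)).
near=> n.
have hn : (b <= n)%nat by near: n; exact: nbhs_infty_ge.
rewrite -(subnK hn) series_addn big_nat_cond big1 ?addr0 //.
by move=> j /andP[/andP[hj _] _]; exact: hw.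
Unshelve. all: by end_near.
Qed.

Lemma finite_cvg0 X : finite_set X -> sX X @ \oo --> (0:R).
Proof.
move=> /finite_bound [b hb].
have -> : sX X = fun i => \sum_(j < b) msk X (lam i) j.
  apply: funext => i; rewrite /sX /rseries_sum (@lim_ev_cst _ b) ?seriesEord //.
  move=> j hj; rewrite /msk memNset // => /hb /=; rewrite ltnNge hj.
  done.
apply: (cvg_finsum (fun i j => msk X (lam i) j)) => j.
rewrite /msk; case: (boolP (j \in X)) => _; [exact: h1|exact: cvg_cst].
Qed.



Lemma works_infinite X : ~ (sX X @ \oo --> (0:R)) -> infinite_set X.
Proof. by move=> h /finite_cvg0. Qed.

Variable (h3 : (fun i => rseries_sum (lam i)) @ \oo --> (1:R)).

Lemma newset (e : nat -> set nat)
  (ead : forall m n, e m = e n \/ finite_set (e m `&` e n))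
  (e0 : forall n, sX (e n) @ \oo --> (0:R)) :
  exists N, ~ (sX N @ \oo --> (0:R)) /\ forall n, finite_set (N `&` e n).
Proof.
pose C n := [set j | exists m, (m <= n)%nat /\ e m j].
have Cmono : forall m n, (m <= n)%nat -> C m `<=` C n.
  by move=> m n mn j [k [hk hj]]; exists k; split => //; exact: leq_trans hk mn.
have CS : forall n, C n.+1 = C n `|` e n.+1.
  move=> n; apply/seteqP; split => j.
    move=> [k [hk hj]]; move: hk; rewrite leq_eqVlt => /orP[/eqP hk|hk].
      by right; rewrite -hk.
    by left; exists k.
  by move=> [[k [hk hj]]|hj]; [exists k; split => //; exact: leqW | exists n.+1].
have C0 : C 0%nat = e 0%nat.
  apply/seteqP; split => j; first by move=> [k [hk hj]]; move: hk; rewrite leqn0 => /eqP <-.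
  by move=> hj; exists 0%nat.
have CI : forall Y n, (forall m, (m <= n)%nat -> finite_set (e m `&` Y)) ->
    finite_set (C n `&` Y).
  move=> Y; elim=> [|n IH] hY; first by rewrite C0; exact: hY.
  rewrite CS setIUl finite_setU; split.
    by apply: IH => m hm; apply: hY; exact: leqW.
  exact: hY.
have hC : forall n, sX (C n) @ \oo --> (0:R).
  elim=> [|n IH]; first by rewrite C0.
  have [[m [hm em]]|nm] := pselect (exists m, (m <= n)%nat /\ e m = e n.+1).
    suff -> : C n.+1 = C n by [].
    rewrite CS; apply/seteqP; split => j; last by move=> hj; left.
    by move=> [//|hj]; exists m; split => //; rewrite em.
  have fin : finite_set (C n `&` e n.+1).
    apply: CI => m hm; have [em|//] := ead m n.+1.
    by exfalso; apply: nm; exists m.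
  have -> : sX (C n.+1) = sX (C n) + sX (e n.+1) - sX (C n `&` e n.+1).
    rewrite funeqE => i.
    suff H : sX (C n.+1) i = sX (C n) i + sX (e n.+1) i - sX (C n `&` e n.+1) i by exact: H.
    by rewrite /sX (msk_union _ _ _ (h2 i)) CS addrK.
  have := @cvgB _ R^o _ _ _ _ _ _ _ (@cvgD _ R^o _ _ _ _ _ _ _ IH (e0 n.+1)) (finite_cvg0 _ fin).
  by rewrite addr0 subr0; apply; typeclasses eauto.
have [N [hN1 hN2]] := @core lam h1 h2 h3 C Cmono hC.
exists N; split => // n; apply: (sub_finite_set _ (hN1 n)).
by move=> j [hj1 hj2]; split => //; exists n.
Qed.

End Outer.

Definition Pk (k : nat) : set nat := [set j | logn 2 j.+1 = k].

Lemma Pk_elem k n : Pk k (expn 2 k * n.*2.+1).-1 /\ (n <= (expn 2 k * n.*2.+1).-1)%nat.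
Proof.
have pos : (0 < expn 2 k * n.*2.+1)%nat by rewrite muln_gt0 expn_gt0.
split.
  rewrite /Pk /= prednK // lognM ?expn_gt0 // pfactorK //.
  by rewrite logn_coprime ?addn0 // coprime2n /= odd_double.
rewrite -ltnS prednK //; apply: (leq_trans (n := n.*2.+1)).
  by rewrite ltnS -addnn leq_addr.
by rewrite leq_pmull // expn_gt0.
Qed.

Lemma Pk_inf k : infinite_set (Pk k).
Proof.
apply: unbounded_infinite => n; have [h1 h2] := Pk_elem k n.
by exists (expn 2 k * n.*2.+1).-1.
Qed.

Lemma Pk_disj k l : k <> l -> finite_set (Pk k `&` Pk l).
Proof.
move=> kl; suff -> : Pk k `&` Pk l = set0 by exact: finite_set0.
by apply/seteqP; split => j //= [h1 h2]; apply: kl; rewrite -h1 -h2.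
Qed.

Theorem lemma4p12 (W : Type) (ltW : W -> W -> Prop) (hW : is_omega1 ltW)
  (lam : W -> nat -> nat -> R)
  (h1 : forall a j, (fun i => lam a i j) @ \oo --> (0 : R))
  (h2 : forall a i, cvgn (series (fun j => `|lam a i j|)))
  (h3 : forall a, (fun i => rseries_sum (lam a i)) @ \oo --> (1 : R)) :
  exists F : set (set nat), almost_disjoint_family F /\
    forall a, exists N' : set nat, F N' /\
      ~ ((fun i => rseries_sum (fun j => if j \in N' then lam a i j else 0))
           @ \oo --> (0 : R)).
Proof.
pose works a X := ~ (sX (lam a) X @ \oo --> (0:R)).
pose Pred a (rec : forall b, ltW b a -> set nat) X :=
  (exists k, X = Pk k) \/ (exists b (h : ltW b a), X = rec b h).
pose Sp a rec X := works a X /\ (Pred a rec X \/ forall Y, Pred a rec Y -> finite_set (X `&` Y)).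
pose G a rec := epsilon (inhabits (@set0 nat)) (Sp a rec).
pose N := Fix (om1_wf hW) (fun _ => set nat) G.
have NE : forall a, N a = G a (fun b _ => N b).
  move=> a; apply: Fix_eq => x f g hfg.
  have -> // : f = g.
  by apply: functional_extensionality_dep => y; apply: functional_extensionality_dep => p; exact: hfg.
pose PN a := Pred a (fun b _ => N b).
pose Fam a X := PN a X \/ X = N a.
have sym : forall X Y, X = Y \/ finite_set (X `&` Y) -> Y = X \/ finite_set (Y `&` X).
  by move=> X Y [->|h]; [left|right; rewrite setIC].
have claim : forall a, Sp a (fun b _ => N b) (N a) /\
    forall X Y, Fam a X -> Fam a Y -> X = Y \/ finite_set (X `&` Y).
  apply: (well_founded_ind (om1_wf hW)) => a IH.
  have pw : forall X Y, PN a X -> PN a Y -> X = Y \/ finite_set (X `&` Y).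
    have pk : forall k Y, PN a Y -> Pk k = Y \/ finite_set (Pk k `&` Y).
      move=> k Y [[l ->]|[b [hb ->]]].
        by have [->|kl] := eqVneq k l; [left|right; apply: Pk_disj; exact/eqP].
      by apply: (IH b hb).2; [left; left; exists k | right].
    move=> X Y [[k ->]|[b1 [hb1 ->]]] hY; first exact: pk.
    case: hY => [[l ->]|[b2 [hb2 ->]]].
      by apply: sym; apply: pk; right; exists b1, hb1.
    case: (om1_total hW b1 b2) => [h12|[<-|h21]]; [|by left|].
      by apply: (IH b2 hb2).2; [left; right; exists b1, h12 | right].
    by apply: (IH b1 hb1).2; [right | left; right; exists b2, h21].
  have ex : exists X, Sp a (fun b _ => N b) X.
    have [f finj] := om1_segments hW a.
    have /choice [g hg] : forall m : nat, exists X, PN a X /\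
        (forall b, ltW b a -> f b = m -> X = N b).
      move=> m; have [[b [hb fb]]|nb] := pselect (exists b, ltW b a /\ f b = m).
        exists (N b); split; first by right; exists b, hb.
        move=> b' hb' fb'; have -> // : b' = b by apply: finj => //; rewrite fb fb'.
      exists (Pk 0); split; first by left; exists 0%nat.
      by move=> b hb fb; exfalso; apply: nb; exists b.
    pose e n := if odd n then g n./2 else Pk n./2.
    have eS : forall X, PN a X -> exists n, e n = X.
      move=> X [[k ->]|[b [hb ->]]].
        by exists k.*2; rewrite /e odd_double doubleK.
      exists (f b).*2.+1; rewrite /e /= odd_double /= uphalf_double.
      exact: (hg _).2.
    have eP : forall n, PN a (e n).
      by move=> n; rewrite /e; case: (odd n); [exact: (hg _).1 | left; exists n./2].
    have [[n wn]|nw] := pselect (exists n, works a (e n)).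
      by exists (e n); split; [exact: wn | left; exact: eP n].
    have e0 : forall n, sX (lam a) (e n) @ \oo --> (0:R).
      by move=> n; apply: contrapT => h; apply: nw; exists n.
    have ead : forall m n, e m = e n \/ finite_set (e m `&` e n).
      by move=> m n; exact: pw.
    have [N' [wN' fN']] := @newset (lam a) (h1 a) (h2 a) (h3 a) e ead e0.
    by exists N'; split => //; right => Y /eS [n <-]; exact: fN'.
  have spec : Sp a (fun b _ => N b) (N a).
    by rewrite NE /G; exact: epsilon_spec ex.
  split => //.
  have nA : forall Y, Fam a Y -> N a = Y \/ finite_set (N a `&` Y).
    move=> Z [hZ|->]; last by left.
    by case: spec.2 => [hN|hfin]; [exact: pw | right; exact: hfin].
  move=> X Y [hX|->] [hY|->]; [exact: pw | apply: sym; apply: nA; by left | apply: nA; by left | by left].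
pose F := fun X => (exists k, X = Pk k) \/ (exists a, X = N a).
exists F; split; last first.
  by move=> a; exists (N a); split; [right; exists a | exact: (claim a).1.1].
split; [|split].
- move=> finF.
  pose h (X : set nat) := logn 2 (epsilon (inhabits 0%nat) X).+1.
  apply: infinite_nat; apply: (sub_finite_set _ (finite_image h finF)).
  move=> k _; exists (Pk k); first by left; exists k.
  exact: (epsilon_spec (inhabits 0%nat) (Pk k) (ex_intro _ _ (Pk_elem k 0).1)).
- move=> X [[k ->]|[a ->]]; first exact: Pk_inf.
  exact: (@works_infinite (lam a) (h1 a) _ (claim a).1.1).
- move=> X Y hX hY XY.
  suff : X = Y \/ finite_set (X `&` Y) by case.
  case: hX => [[k ->]|[a1 ->]]; case: hY => [[l ->]|[a2 ->]].
  + by have [->|kl] := eqVneq k l; [left|right; apply: Pk_disj; exact/eqP].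
  + by apply: (claim a2).2; [left; left; exists k | right].
  + by apply: (claim a1).2; [right | left; left; exists l].
  + case: (om1_total hW a1 a2) => [h12|[<-|h21]]; [|by left|].
      by apply: (claim a2).2; [left; right; exists a1, h12 | right].
    by apply: (claim a1).2; [right | left; right; exists a2, h21].
Qed.
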